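(* Let $G$ be an infinite countable group such that $\mathbb{Z}$ is a homomorphic image of $G$. For every integer $m\geq 1$, there exists a minimal subshift $X\subseteq \{0,\dots,m-1\}^G$ whose topological sequence entropy $h^*_{top}(X,\sigma,G)$ equals $\log(m)$.
   Context: For a finite set $\Sigma$ with the discrete topology, $\Sigma^G$ carries the product topology and the left shift action $\sigma$ of $G$ given by $\sigma^g(x)(h)=x(g^{-1}h)$ for $g,h\in G$, $x\in\Sigma^G$. A subshift is a nonempty closed $\sigma$-invariant subset $X\subseteq \Sigma^G$. A dynamical system $(X,\varphi,G)$ (continuous action of $G$ on a compact metric space $X$) is minimal if every orbit $\{\varphi^g x:g\in G\}$ is dense. For an open cover $\mathcal U$ of $X$ and a sequence $S=(g_n)_{n\in\mathbb N}$ in $G$, set $h^*_{top}(X,\varphi,G,\mathcal U;S)=\limsup_{n\to\infty}\frac1n\log N\big(\bigvee_{i=1}^n\varphi^{g_i^{-1}}\mathcal U\big)$, where $N(\mathcal C)$ is the minimal cardinality of a subcover of $\mathcal C$; the topological sequence entropy is $h^*_{top}(X,\varphi,G)=\sup_{\mathcal U,S}h^*_{top}(X,\varphi,G,\mathcal U;S)$, the supremum over all open covers and all sequences in $G$. *)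

(* Defs.v *)
From HB Require Import structures.
From mathcomp Require Import all_boot all_order all_algebra.
From mathcomp Require Import all_classical all_reals.
From mathcomp Require Import ereal topology normedtype sequences exp.
Set Implicit Arguments. Unset Strict Implicit. Unset Printing Implicit Defensive.
Import Order.TTheory GRing.Theory Num.Theory.
Local Open Scope classical_set_scope.
Local Open Scope ring_scope.

Definition is_group (G : Type) (mul : G -> G -> G) (inv : G -> G) (one : G) : Prop :=
  [/\ forall a b c, mul a (mul b c) = mul (mul a b) c,
      forall a, mul one a = a /\ mul a one = a &
      forall a, mul (inv a) a = one /\ mul a (inv a) = one].

Definition countable_type (G : Type) : Prop := exists f : G -> nat, injective f.
Definition infinite_type (G : Type) : Prop := exists f : nat -> G, injective f.

Definition Z_hom_image (G : Type) (mul : G -> G -> G) : Prop :=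
  exists f : G -> int, (forall a b, f (mul a b) = f a + f b) /\
                       (forall z : int, exists a, f a = z).

Section Shift.
Variables (G : Type) (mul : G -> G -> G) (inv : G -> G) (m : nat).

Definition cfg := G -> 'I_m.

Definition shift (g : G) (x : cfg) : cfg := fun h => x (mul (inv g) h).

(* closed in the product topology of discrete 'I_m: every y all of whose finite
   windows are realised by points of X lies in X *)
Definition closed_cfg (X : set cfg) : Prop :=
  forall y : cfg,
    (forall F : set G, finite_set F -> exists2 x, X x & forall h, F h -> x h = y h) ->
    X y.

Definition subshift (X : set cfg) : Prop :=
  [/\ X !=set0, closed_cfg X & forall g x, X x -> X (shift g x)].

(* relatively open subsets of X (subspace of the product topology) *)
Definition rel_open (X A : set cfg) : Prop :=
  A `<=` X /\
  forall x, A x -> exists F : set G,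
      finite_set F /\ forall y, X y -> (forall h, F h -> y h = x h) -> A y.

Definition minimal_shift (X : set cfg) : Prop :=
  forall x, X x -> forall A, rel_open X A -> A !=set0 ->
    exists g, A (shift g x).

Definition open_cover (X : set cfg) (C : set (set cfg)) : Prop :=
  (forall A, C A -> rel_open X A) /\ X `<=` \bigcup_(A in C) A.

Definition has_subcover (X : set cfg) (C : set (set cfg)) (n : nat) : Prop :=
  exists f : 'I_n -> set cfg, (forall i, C (f i)) /\ X `<=` \bigcup_i f i.

Definition join_cover (C : set (set cfg)) (S : nat -> G) (n : nat) : set (set cfg) :=
  [set B | exists As : nat -> set cfg,
      (forall i, (1 <= i <= n)%N -> C (As i)) /\
      B = [set y | forall i, (1 <= i <= n)%N -> (shift (inv (S i)) @` As i) y]].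
End Shift.

Section Entropy.
Variables (R : realType) (G : Type) (mul : G -> G -> G) (inv : G -> G) (m : nat).

Definition Ncov (X : set (cfg G m)) (C : set (set (cfg G m))) : R :=
  inf [set (n%:R : R) | n in [set n | has_subcover X C n]].

Definition seq_entropy_cover (X : set (cfg G m)) (U : set (set (cfg G m)))
    (S : nat -> G) : \bar R :=
  limn_esup (fun n : nat =>
    ((n%:R)^-1 * ln (Ncov X (join_cover mul inv U S n)))%:E).

Definition seq_entropy (X : set (cfg G m)) : \bar R :=
  ereal_sup [set e | exists (U : set (set (cfg G m))) (S : nat -> G),
                      open_cover X U /\ e = seq_entropy_cover X U S].
End Entropy.

(* Main.v *)
Require Import Defs.
From mathcomp Require Import all_boot all_order all_algebra.
From mathcomp Require Import all_classical all_reals.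
From mathcomp Require Import ereal topology normedtype sequences exp.
From mathcomp Require Import finmap zify ring lra.
Import Order.TTheory GRing.Theory Num.Theory.
Local Open Scope classical_set_scope.
Local Open Scope ring_scope.

Set Implicit Arguments. Unset Strict Implicit. Unset Printing Implicit Defensive.
Section Toeplitz.
Variables (m : nat) (hm : (0 < m)%N).

Definition rr (j : nat) : nat := (2 * m ^ j.+1 + 3)%N.
Fixpoint pp (j : nat) : nat := if j is j'.+1 then (pp j' * rr j')%N else 1%N.
Definition PP (j : nat) : int := (pp j)%:Z.

Lemma rr_ge5 j : (5 <= rr j)%N.
Proof. rewrite /rr; have : (0 < m ^ j.+1)%N by rewrite expn_gt0 hm. lia. Qed.

Lemma pp_gt0 j : (0 < pp j)%N.
Proof. elim: j => //= j ih; rewrite muln_gt0 ih /=; have := rr_ge5 j; lia. Qed.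

Lemma pp_big j : (2 * j < pp j)%N.
Proof. elim: j => //= j ih; have := rr_ge5 j; nia. Qed.

Lemma pp_dvd j k : (j <= k)%N -> (pp j %| pp k)%N.
Proof.
move=> /subnKC <-; elim: (k - j)%N => [|i ih]; first by rewrite addn0.
by rewrite addnS /=; apply: dvdn_mulr.
Qed.

Definition dig (j : nat) (t : int) : nat := `|modz (divz t (PP j)) (rr j)%:Z|%N.

Lemma digE j t : Posz (dig j t) = modz (divz t (PP j)) (rr j)%:Z.
Proof. by rewrite /dig gez0_abs // modz_ge0 //; have := rr_ge5 j; lia. Qed.

Lemma dig_lt j t : (dig j t < rr j)%N.
Proof.
have h := @ltz_pmod (divz t (PP j)) (rr j)%:Z.
rewrite -digE in h; have := rr_ge5 j; move: h; lia.
Qed.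

Lemma dig_per j k t q : (j < k)%N -> dig j (t + PP k * q) = dig j t.
Proof.
move=> jk; apply/eqP; rewrite -eqz_nat !digE; apply/eqP.
have /dvdnP [Q hQ] := pp_dvd jk.
have -> : PP k * q = ((Q%:Z * q) * (rr j)%:Z) * PP j.
  by rewrite /PP hQ /= !PoszM; ring.
rewrite addrC divzMDl; last by rewrite /PP; have := pp_gt0 j; lia.
by rewrite modzMDl.
Qed.


Definition hole (j : nat) (t : int) : bool :=
  odd (dig j t) && ((dig j t)./2 %/ m == (if j is j'.+1 then (dig j' t)./2 else 0%N))%N.

Lemma PP_gt0 j : 0 < PP j.
Proof. rewrite /PP ltz_nat; exact: pp_gt0. Qed.

Lemma divz_neg1 t d : 0 < d -> - d <= t < 0 -> divz t d = -1.
Proof.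
move=> d0 /andP[h1 h2].
have : divz (1 * d + t) d = 1 + divz t d by rewrite divzMDl //; lia.
rewrite divz_small; last by apply/andP; split; [lia|rewrite gtz0_abs; lia].
lia.
Qed.

Lemma nonhole_abs t : ~~ hole `|t|%N t.
Proof.
rewrite /hole; have hp := pp_big `|t|%N.
move: hp; set j := `|t|%N => hp; have hj : j = `|t|%N by [].
suff : dig j t = 0%N \/ dig j t = (rr j).-1.
  case=> ->; first by [].
  have -> : (rr j).-1 = (m ^ j.+1 + 1).*2 by rewrite /rr -muln2; lia.
  by rewrite odd_double.
have [t0|t0] := leP 0 t.
  left; apply/eqP; rewrite -eqz_nat digE divz_small ?mod0z //.
  apply/andP; split => //; rewrite /PP gtz0_abs; last by have := pp_gt0 j; lia.
  lia.
right; apply/eqP; rewrite -eqz_nat digE divz_neg1 ?PP_gt0 //; last first.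
  apply/andP; split; last by []. rewrite /PP; lia.
have h5 := rr_ge5 j.
have -> : (-1 : int) = (-1) * (rr j)%:Z + ((rr j).-1)%:Z by lia.
rewrite modzMDl modz_small //; apply/andP; split; lia.
Qed.

Lemma ex_nonhole t : exists j, ~~ hole j t.
Proof. by exists `|t|%N; exact: nonhole_abs. Qed.

Definition JJ (t : int) : nat := ex_minn (ex_nonhole t).

Lemma JJ_spec t : ~~ hole (JJ t) t /\ forall j, (j < JJ t)%N -> hole j t.
Proof.
rewrite /JJ; case: ex_minnP => j hj hmin; split => // i ij.
by apply/negPn/negP => /hmin; rewrite leqNgt ij.
Qed.

Lemma JJ_le t : (JJ t <= `|t|)%N.
Proof.
rewrite /JJ; case: ex_minnP => j hj hmin; exact: hmin (nonhole_abs t).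
Qed.

Definition val_of (j : nat) (t : int) : 'I_m := Ordinal (ltn_pmod (dig j t)./2 hm).

Definition zz (t : int) : 'I_m := val_of (JJ t) t.

Lemma hole_per j k t q : (j < k)%N -> hole j (t + PP k * q) = hole j t.
Proof.
move=> jk; rewrite /hole dig_per //; case: j jk => // j jk.
by rewrite dig_per // ltnW.
Qed.

Lemma JJ_unique t j : ~~ hole j t -> (forall i, (i < j)%N -> hole i t) -> JJ t = j.
Proof.
move=> hj hlt; have [h1 h2] := JJ_spec t.
apply/eqP; rewrite eqn_leq; apply/andP; split.
  by rewrite leqNgt; apply/negP => /h2; rewrite (negbTE hj).
by rewrite leqNgt; apply/negP => /hlt; rewrite (negbTE h1).
Qed.

Lemma zz_per k t q : (exists2 j, (j < k)%N & ~~ hole j t) -> zz (t + PP k * q) = zz t.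
Proof.
case=> j jk hj.
have [h1 h2] := JJ_spec t.
have Jk : (JJ t < k)%N.
  apply: leq_ltn_trans jk; rewrite leqNgt; apply/negP => /h2; rewrite (negbTE hj).
  by [].
rewrite /zz; have -> : JJ (t + PP k * q) = JJ t.
  apply: JJ_unique; first by rewrite hole_per.
  by move=> i iJ; rewrite hole_per ?h2 // (ltn_trans iJ Jk).
by rewrite /val_of; apply: val_inj => /=; rewrite dig_per.
Qed.


Definition inD (d : nat) (t : int) : Prop := forall j, (j < d)%N -> hole j t.

Lemma modz_succ q (r : int) : 0 < r -> modz q r + 1 < r -> modz (q + 1) r = modz q r + 1.
Proof.
move=> r0 h.
have -> : q + 1 = divz q r * r + (modz q r + 1) by rewrite {1}(divz_eq q r); ring.
rewrite modzMDl modz_small //; apply/andP; split => //.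
have := @modz_ge0 q r; lia.
Qed.

Lemma odd_lt_pred j t : odd (dig j t) -> ((dig j t).+1 < rr j)%N.
Proof.
move=> ho; have hl := dig_lt j t; rewrite ltn_neqAle hl andbT.
apply/negP => /eqP he.
have : odd (rr j) by rewrite /rr (_ : (2 * m ^ j.+1 + 3 = (m ^ j.+1 + 1).*2.+1)%N) /= ?odd_double //; rewrite -muln2; lia.
by rewrite -he /= ho.
Qed.

Lemma divz_step i t : divz t (PP i) = divz t (PP i.+1) * (rr i)%:Z + Posz (dig i t).
Proof.
rewrite digE /PP /= PoszM divzMA_ge0 //; first exact: divz_eq.
Qed.

Lemma divz_close t t' e : `|t - t'| < PP e -> `|divz t (PP e) - divz t' (PP e)| <= 1.
Proof.
move=> h; have hp := PP_gt0 e.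
have e1 := divz_eq t (PP e); have e2 := divz_eq t' (PP e).
have m1 := @modz_ge0 t (PP e); have m2 := @modz_ge0 t' (PP e).
have l1 := @ltz_pmod t (PP e) hp; have l2 := @ltz_pmod t' (PP e) hp.
move: (divz t (PP e)) (divz t' (PP e)) (modz t (PP e)) (modz t' (PP e)) e1 e2 m1 m2 l1 l2.
move=> a b c d e1 e2 m1 m2 l1 l2.
have {}m1 : 0 <= c by apply: m1; lia.
have {}m2 : 0 <= d by apply: m2; lia.
have : (a - b) * PP e < 2 * PP e by nia.
have : - (2 * PP e) < (a - b) * PP e by nia.
nia.
Qed.

Lemma gap e t t' : inD e.+1 t -> inD e.+1 t' -> `|t - t'| < PP e -> t = t'.
Proof.
move=> ht ht' hc.
have hcl := divz_close hc.
have heq : divz t (PP e) = divz t' (PP e).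
  wlog lt : t t' ht ht' hc hcl / divz t (PP e) <= divz t' (PP e).
    move=> hw; have [h|h] := lerP (divz t (PP e)) (divz t' (PP e)); first exact: hw.
    apply/esym/hw => //; [by rewrite distrC|by rewrite distrC|by apply: ltW].
  have [//|hne] := eqVneq (divz t (PP e)) (divz t' (PP e)).
  have h1 : divz t' (PP e) = divz t (PP e) + 1 by lia.
  have ho : odd (dig e t) by have := ht e (ltnSn e); rewrite /hole => /andP[].
  have ho' : odd (dig e t') by have := ht' e (ltnSn e); rewrite /hole => /andP[].
  have hlt := odd_lt_pred ho.
  have : Posz (dig e t') = Posz (dig e t) + 1.
    rewrite !digE h1 modz_succ //; first by have := rr_ge5 e; lia.
    by rewrite -digE; lia.
  move=> /eqP; rewrite -[_ + 1]PoszD eqz_nat => /eqP hd.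
  by move: ho'; rewrite hd addn1 /= ho.
have hdig : forall n i, (i + n = e)%N -> dig i t = dig i t'.
  elim=> [|n ih] i hi; first by move: hi; rewrite addn0 => ->; apply/eqP; rewrite -eqz_nat !digE heq.
  have := ih i.+1; rewrite addSnnS => /(_ hi) hd.
  have dF : forall u, inD e.+1 u -> dig i u = ((dig i.+1 u)./2 %/ m).*2.+1.
    move=> u hu; have h1 := hu i; have h2 := hu i.+1.
    have hi1 : (i < e.+1)%N by lia.
    have hi2 : (i.+1 < e.+1)%N by lia.
    move: (h1 hi1) (h2 hi2); rewrite /hole => /andP[o1 _] /andP[_ /eqP ->].
    by rewrite -[LHS]odd_double_half o1 add1n.
  by rewrite (dF t ht) (dF t' ht') hd.
have hq : forall n i, (i + n = e)%N -> divz t (PP i) = divz t' (PP i).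
  elim=> [|n ih] i hi; first by move: hi; rewrite addn0 => ->.
  have := ih i.+1; rewrite addSnnS => /(_ hi) hd.
  by rewrite divz_step [RHS]divz_step hd (hdig n.+1 i hi).
by have := hq e 0%N (add0n e); rewrite /PP /= !divz1.
Qed.


Section Indep.
Variable a : nat -> 'I_m.
Fixpoint cc (j : nat) : nat := if j is j'.+1 then (cc j' * m + a j)%N else a 0%N.
Fixpoint NN (j : nat) : int := if j is j'.+1 then NN j' + PP j' * Posz (cc j').*2.+1 else 0.

Lemma cc_lt j : (cc j < m ^ j.+1)%N.
Proof.
elim: j => [|j ih] /=; first by rewrite expn1.
have := ltn_ord (a j.+1); rewrite expnS; nia.
Qed.

Lemma NN_spec j : 0 <= NN j < PP j /\ forall i, (i < j)%N -> dig i (NN j) = (cc i).*2.+1.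
Proof.
elim: j => [|j [hb ih]] /=; first by split => //; rewrite /PP.
have hc := cc_lt j.
have hP := PP_gt0 j.
have hr : ((cc j).*2.+1 < rr j)%N by rewrite /rr -muln2; lia.
split.
  rewrite /PP /= PoszM -/(PP j); apply/andP; split; first by nia.
  have : Posz (cc j).*2.+1 + 1 <= (rr j)%:Z by lia.
  nia.
move=> i; rewrite ltnS leq_eqVlt => /orP[/eqP ->|ilt].
  apply/eqP; rewrite -eqz_nat digE addrC (mulrC (PP j)) divzMDl; last by lia.
  rewrite divz_small; last by rewrite gtz0_abs.
  by rewrite addr0 modz_small //; apply/andP; split => //; lia.
by rewrite dig_per // ih.
Qed.

Lemma modz_pred q (r : int) : 0 < r -> 1 <= modz q r -> modz (q - 1) r = modz q r - 1.
Proof.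
move=> r0 h.
have -> : q - 1 = divz q r * r + (modz q r - 1) by rewrite {1}(divz_eq q r); ring.
rewrite modzMDl modz_small //; apply/andP; split; first by lia.
have := @ltz_pmod q r r0; lia.
Qed.

Lemma indep n : exists N : int, forall i, (i < n)%N -> zz (N - PP i) = a i.
Proof.
exists (NN n) => i hi.
have [_ hd] := NN_spec n.
have hholes : forall j, (j < n)%N -> hole j (NN n).
  move=> j jn; rewrite /hole hd // /= odd_double /=.
  rewrite uphalf_double.
  case: j jn => [|j] jn /=.
    by rewrite divn_small.
  rewrite hd /=; last by lia.
  rewrite uphalf_double.
  by rewrite divnMDl // divn_small ?addn0 // ltn_ord.
have ht : forall j, (j < i)%N -> dig j (NN n - PP i) = dig j (NN n).
  by move=> j ji; rewrite -[NN n - PP i](_ : NN n + PP i * (-1) = _) ?dig_per // mulrN1.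
have hdi : dig i (NN n - PP i) = (cc i).*2.
  apply/eqP; rewrite -eqz_nat digE.
  rewrite (_ : NN n - PP i = (-1) * PP i + NN n); last by ring.
  rewrite divzMDl; last by have := PP_gt0 i; lia.
  rewrite addrC modz_pred; first last.
  - by rewrite -digE hd.
  - by have := rr_ge5 i; lia.
  by rewrite -digE hd //; lia.
have hJ : JJ (NN n - PP i) = i.
  apply: JJ_unique.
    by rewrite /hole hdi odd_double.
  move=> j ji; rewrite -[NN n - PP i](_ : NN n + PP i * (-1) = _) ?hole_per //; last by rewrite mulrN1.
  by apply: hholes; lia.
rewrite /zz hJ /val_of; apply: val_inj => /=.
rewrite hdi doubleK.
case: i hi {ht hdi hJ} => [|i] hi /=; first by rewrite modn_small.
by rewrite modnMDl modn_small.
Qed.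
End Indep.


Lemma UR (K : nat) (n : int) : exists P : nat, (0 < P)%N /\
  forall M : int, exists k : int, M <= k < M + P%:Z /\
    forall s : int, `|s| <= K%:Z -> zz (k + s) = zz (n + s).
Proof.
set k0 := (`|n| + K).+1%N.
exists (pp k0); split; first exact: pp_gt0.
move=> M; have hP := PP_gt0 k0.
set q := - divz (n - M) (PP k0).
exists (n + PP k0 * q); split.
  have e1 := divz_eq (n - M) (PP k0).
  have m1 := @modz_ge0 (n - M) (PP k0).
  have l1 := @ltz_pmod (n - M) (PP k0) hP.
  have {}m1 : 0 <= modz (n - M) (PP k0) by apply: m1; lia.
  rewrite /q /PP in e1 m1 l1 *; apply/andP; split; nia.
move=> s hs.
rewrite (_ : n + PP k0 * q + s = (n + s) + PP k0 * q); last by ring.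
apply: zz_per; exists (JJ (n + s)); last by have [] := JJ_spec (n + s).
have := JJ_le (n + s); rewrite /k0; lia.
Qed.

Lemma modz_abs_lt N e : (`|modz N (PP e)| < pp e)%N.
Proof.
have hP := PP_gt0 e.
have m1 : 0 <= modz N (PP e) by apply: modz_ge0; lia.
have l1 := @ltz_pmod N (PP e) hP.
rewrite /PP in m1 l1; lia.
Qed.

Lemma count_lemma (K : nat) : exists C : nat, (0 < C)%N /\
  forall (n : nat) (s : nat -> int),
  exists Phi : int -> 'I_C * {ffun 'I_n -> 'I_m},
  forall N N', Phi N = Phi N' -> forall (i : nat) (u : int), (i < n)%N ->
    `|u| <= K%:Z -> zz (s i + u + N) = zz (s i + u + N').
Proof.
exists (pp K.+1); split; first exact: pp_gt0.
move=> n s.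
pose deep (i : nat) (N : int) := xget 0 [set t | `|t - (s i + N)| <= K%:Z /\ inD K.+1 t].
exists (fun N => (Ordinal (modz_abs_lt N K.+1), [ffun i : 'I_n => zz (deep i N)])).
move=> N N' [hmod hff] i u hi hu.
have hP := PP_gt0 K.+1.
have hm1 : modz N (PP K.+1) = modz N' (PP K.+1).
  have m1 : 0 <= modz N (PP K.+1) by apply: modz_ge0; lia.
  have m2 : 0 <= modz N' (PP K.+1) by apply: modz_ge0; lia.
  lia.
set q := divz N' (PP K.+1) - divz N (PP K.+1).
have hN' : N' = N + PP K.+1 * q.
  have e1 := divz_eq N (PP K.+1); have e2 := divz_eq N' (PP K.+1).
  rewrite /q; lia.
set t := s i + u + N.
have ht' : s i + u + N' = t + PP K.+1 * q by rewrite hN' /t; ring.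
rewrite ht'.
have [hin|hnin] := pselect (inD K.+1 t); last first.
  symmetry; apply: zz_per.
  have [j hj] : exists j, ~ ((j < K.+1)%N -> hole j t).
    by apply/existsNP => hall; apply: hnin.
  move: hj => /not_implyP [jK hj]; exists j => //; exact/negP.
have hin' : inD K.+1 (t + PP K.+1 * q) by move=> j hj; rewrite hole_per // hin.
have hgapK := pp_big K.
have d1 : deep i N = t.
  have := @xgetPex _ 0 [set t | `|t - (s i + N)| <= K%:Z /\ inD K.+1 t].
  case; first by exists t; split => //; rewrite /t; lia.
  rewrite -/(deep i N) => hd1 hd2.
  apply: gap hd2 hin _; rewrite /PP; move: hd1; rewrite /t; lia.
have d2 : deep i N' = t + PP K.+1 * q.
  have := @xgetPex _ 0 [set t | `|t - (s i + N')| <= K%:Z /\ inD K.+1 t].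
  case; first by exists (t + PP K.+1 * q); split => //; rewrite -ht' /t; lia.
  rewrite -/(deep i N') => hd1 hd2.
  apply: gap hd2 hin' _; rewrite /PP; move: hd1; rewrite -ht' /t; lia.
have := congr1 (fun f : {ffun 'I_n -> 'I_m} => f (Ordinal hi)) hff; rewrite !ffunE /= d1 d2.
done.
Qed.

End Toeplitz.

Section Pull.
Variables (G : Type) (mul : G -> G -> G) (inv : G -> G) (one : G).
Hypothesis grpG : is_group mul inv one.
Variable (f : G -> int).
Hypothesis f_add : forall a b, f (mul a b) = f a + f b.
Variable (pre : int -> G).
Hypothesis f_pre : forall z, f (pre z) = z.
Variable (idx : G -> nat).
Hypothesis idx_inj : injective idx.
Variables (m : nat) (hm : (0 < m)%N).

Local Notation cfgT := (cfg G m).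
Local Notation sh := (@Defs.shift G mul inv m).

Lemma f_one : f one = 0.
Proof.
case: grpG => _ h1 _; have := f_add one one; rewrite (proj1 (h1 one)); lia.
Qed.

Lemma f_inv g : f (inv g) = - f g.
Proof.
case: grpG => _ _ h2; have := f_add (inv g) g; rewrite (proj1 (h2 g)) f_one; lia.
Qed.

Lemma sh_inv_sh g a : sh (inv g) (sh g a) = a.
Proof.
case: grpG => hA h1 h2; apply: funext => h; rewrite /Defs.shift hA (proj2 (h2 (inv g))).
by rewrite (proj1 (h1 h)).
Qed.

Lemma sh_sh_inv g a : sh g (sh (inv g) a) = a.
Proof.
case: grpG => hA h1 h2; apply: funext => h; rewrite /Defs.shift hA (proj1 (h2 (inv g))).
by rewrite (proj1 (h1 h)).
Qed.

Lemma img_shE g (A : set cfgT) y : (sh (inv g) @` A) y <-> A (sh g y).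
Proof.
split; first by case=> a Aa <-; rewrite sh_sh_inv.
by move=> Ay; exists (sh g y) => //; rewrite sh_inv_sh.
Qed.

Definition Xz : set cfgT :=
  [set x | forall F : set G, finite_set F ->
      exists N : int, forall h, F h -> x h = zz hm (f h + N)].

Lemma Xz_shift g x : Xz x -> Xz (sh g x).
Proof.
move=> hx F fF.
have [N hN] := hx _ (finite_image (fun h => mul (inv g) h) fF).
exists (N - f g) => h Fh; rewrite /Defs.shift hN; last by exists h.
by rewrite f_add f_inv; congr zz; ring.
Qed.

Lemma Xz_sub : subshift mul inv Xz.
Proof.
split.
- by exists (fun h => zz hm (f h)) => F _; exists 0 => h _; rewrite addr0.
- move=> y hy F fF; have [x Xx hxy] := hy F fF.
  have [N hN] := Xx F fF; exists N => h Fh; rewrite -hxy //; exact: hN.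
- by move=> g x; apply: Xz_shift.
Qed.

Lemma finite_bound (T : Type) (F : set T) (phi : T -> nat) :
  finite_set F -> exists k, forall h, F h -> (phi h < k)%N.
Proof.
move=> /(finite_image phi) /finite_fsetP [X hX].
exists (\max_(i <- finmap.enum_fset X) i).+1 => h Fh; rewrite ltnS.
have hin : (phi h \in finmap.enum_fset X).
  by have : [set` X] (phi h) by rewrite -hX; exists h.
exact: (@leq_bigmax_seq _ _ xpredT id (phi h) hin isT).
Qed.

Lemma Xz_min : minimal_shift mul inv Xz.
Proof.
move=> x Xx A [AX Aop] [y Ay].
have [F [fF hF]] := Aop y Ay.
have [n hn] := (AX y Ay) F fF.
have [K hK] := finite_bound (fun h => `|f h|%N) fF.
have [P [P0 hP]] := UR hm K n.
pose W := \bigcup_(j in `I_P) ((fun h => mul (inv (pre (- j%:Z))) h) @` F).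
have fW : finite_set W.
  by apply: bigcup_finite; [exact: finite_II|move=> j _; exact: finite_image].
have [N hN] := Xx W fW.
have [k [hk hz]] := hP N.
set j := `|k - N|%N.
have hj : (j < P)%N by rewrite /j; lia.
have hjk : j%:Z = k - N by rewrite /j; lia.
exists (pre (- j%:Z)); apply: hF; first exact: Xz_shift.
move=> h Fh; rewrite /Defs.shift hN; last by exists j => //; exists h.
rewrite f_add f_inv f_pre opprK (hn h Fh).
have := hz (f h); rewrite (_ : k + f h = f h + j%:Z + N); last by rewrite hjk; ring.
move=> hz'; rewrite (addrC j%:Z) (addrC (f h) n) hz' //.
by have := hK h Fh; lia.
Qed.


Definition agree (k : nat) (x y : cfgT) := forall h, (idx h < k)%N -> x h = y h.

Lemma lebesgue (X : set cfgT) (U : set (set cfgT)) :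
  closed_cfg X -> open_cover X U ->
  exists k : nat, forall x, X x -> exists A, U A /\
     forall y, X y -> agree k y x -> A y.
Proof.
move=> Xcl [Uop Ucov].
pose good k x := exists A, U A /\ forall y, X y -> agree k y x -> A y.
apply: contrapT => hcon.
have hbad : forall k, exists x, X x /\ ~ good k x.
  move=> k; apply: contrapT => hk; apply: hcon; exists k => x Xx.
  by apply: contrapT => gx; apply: hk; exists x.
have mono : forall k k' x, (k <= k')%N -> ~ good k' x -> ~ good k x.
  move=> k k' x kk' ng [A [UA hA]]; apply: ng; exists A; split => // y Xy ag.
  by apply: hA => // h hh; apply: ag; exact: leq_trans hh kk'.
pose Q k x := forall k', (k <= k')%N -> exists x', [/\ X x', agree k x' x & ~ good k' x'].
have Q0 : forall x, Q 0%N x.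
  move=> x k' _; have [x' [Xx' hb]] := hbad k'; exists x'; split => //.
have step : forall k x, Q k x -> exists v : 'I_m,
    Q k.+1 (fun h => if idx h == k then v else x h).
  move=> k x hQ; apply: contrapT => hn.
  have hv : forall v : 'I_m, exists kv, (k.+1 <= kv)%N /\ forall x', X x' ->
      agree k.+1 x' (fun h => if idx h == k then v else x h) -> good kv x'.
    move=> v; apply: contrapT => hv; apply: hn; exists v => k' hk'.
    apply: contrapT => hk; apply: hv; exists k'; split => // x' Xx' ag.
    by apply: contrapT => ng; apply: hk; exists x'.
  have [kv hkv] := choice hv.
  pose K' := (k.+1 + \max_(v : 'I_m) kv v)%N.
  have [x' [Xx' ag nb]] := hQ K' (leq_trans (leqnSn k) (leq_addr _ _)).
  have [[h0 e0]|nh] := pselect (exists h0, idx h0 = k).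
    have [_ hg] := hkv (x' h0).
    have : good (kv (x' h0)) x'.
      apply: hg => // h hh; case: ifP => [/eqP e|ne].
        by have -> : h = h0 by apply: idx_inj; rewrite e e0.
      by apply: ag; move: hh ne; rewrite ltnS leq_eqVlt => /orP[->|].
    apply: mono nb; rewrite /K' (leq_trans _ (leq_addl _ _)) //.
    exact: (@leq_bigmax _ (fun v => kv v) (x' h0)).
  have [_ hg] := hkv (Ordinal hm).
  have : good (kv (Ordinal hm)) x'.
    apply: hg => // h hh; case: ifP => [/eqP e|ne].
      by exfalso; apply: nh; exists h.
    by apply: ag; move: hh ne; rewrite ltnS leq_eqVlt => /orP[->|].
  apply: mono nb; rewrite /K' (leq_trans _ (leq_addl _ _)) //.
  exact: (@leq_bigmax _ (fun v => kv v) (Ordinal hm)).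
have hex : forall p : nat * cfgT, exists y : cfgT, Q p.1 p.2 ->
    Q p.1.+1 y /\ forall h, idx h != p.1 -> y h = p.2 h.
  move=> [k x]; have [hq|hq] := pselect (Q k x).
    have [v hv] := step k x hq; exists (fun h => if idx h == k then v else x h).
    by move=> _; split => // h /negbTE /= ->.
  by exists x => /hq.
have [nxt hnxt] := choice hex.
pose xs := fix xs k := if k is k'.+1 then nxt (k', xs k') else (fun _ : G => Ordinal hm).
have Qxs : forall k, Q k (xs k).
  by elim=> [|k ih]; [exact: Q0|exact: (proj1 (hnxt (k, xs k) ih))].
pose y h := xs (idx h).+1 h.
have agy : forall k, agree k (xs k) y.
  elim=> [|k ih] h //; rewrite ltnS leq_eqVlt => /orP[/eqP e|lt].
    by rewrite /y e.
  rewrite /= (proj2 (hnxt (k, xs k) (Qxs k))) /=; first exact: ih.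
  by rewrite neq_ltn lt.
have Xy : X y.
  apply: Xcl => F fF; have [k hk] := finite_bound idx fF.
  have [x' [Xx' ag _]] := Qxs k k (leqnn k).
  by exists x' => // h Fh; rewrite ag ?agy //; exact: hk.
have [A UA Ay] := Ucov y Xy.
have [_ hop] := Uop A UA.
have [F [fF hF]] := hop y Ay.
have [k hk] := finite_bound idx fF.
have [x' [Xx' ag nb]] := Qxs k k (leqnn k).
apply: nb; exists A; split => // y' Xy' ag'.
apply: hF => // h Fh; rewrite ag' ?ag ?agy //; exact: hk.
Qed.


Lemma finite_Wk k : finite_set [set h | (idx h < k)%N].
Proof.
apply: (@sub_finite_set _ _ (\bigcup_(j in `I_k) [set h | idx h = j])).
  by move=> h /= hk; exists (idx h).
apply: bigcup_finite; first exact: finite_II.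
move=> j _; have [[h0 e0]|nh] := pselect (exists h0, idx h0 = j).
  apply: (@sub_finite_set _ _ [set h0]); last exact: finite_set1.
  by move=> h /= e; apply: idx_inj; rewrite e e0.
apply: (@sub_finite_set _ _ set0); last exact: finite_set0.
by move=> h /= e; apply: nh; exists h.
Qed.

Lemma x0_in : Xz (fun h => zz hm (f h)).
Proof. by move=> F _; exists 0 => h _; rewrite addr0. Qed.

Lemma upper_cover (U : set (set cfgT)) : open_cover Xz U ->
  exists C : nat, (0 < C)%N /\ forall (S : nat -> G) (n : nat),
    has_subcover Xz (join_cover mul inv U S n) (C * m ^ n).
Proof.
move=> hU.
have [_ Xcl _] := Xz_sub.
have [k hk] := lebesgue Xcl hU.
have hAch : forall x : cfgT, exists A : set cfgT, Xz x -> U A /\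
    forall y, Xz y -> agree k y x -> A y.
  move=> x; have [Xx|nX] := pselect (Xz x); last by exists set0.
  by have [A hA] := hk x Xx; exists A.
have [Ach hAch'] := choice hAch.
have [K hK] := finite_bound (fun h => `|f h|%N) (finite_Wk k).
have [C [C0 hcount]] := count_lemma hm K.
exists C; split => // S n.
have [Phi hPhi] := hcount n (fun i => - f (S i.+1)).
pose E := \bigcup_(i in `I_n) ((fun w => mul (inv (S i.+1)) w) @` [set h | (idx h < k)%N]).
have fE : finite_set E.
  by apply: bigcup_finite; [exact: finite_II|move=> i _; exact/finite_image/finite_Wk].
have hN : forall x : cfgT, exists N : int, Xz x -> forall h, E h -> x h = zz hm (f h + N).
  move=> x; have [Xx|nX] := pselect (Xz x); last by exists 0.
  by have [N hN] := Xx E fE; exists N.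
have [Nx hNx] := choice hN.
pose PhiG x := Phi (Nx x).
have key : forall x y, Xz x -> Xz y -> PhiG x = PhiG y -> forall i w, (i < n)%N ->
    (idx w < k)%N -> x (mul (inv (S i.+1)) w) = y (mul (inv (S i.+1)) w).
  move=> x y Xx Xy hxy i w hi hw.
  have hE : E (mul (inv (S i.+1)) w) by exists i => //; exists w.
  rewrite (hNx x Xx _ hE) (hNx y Xy _ hE) f_add f_inv.
  have := hPhi _ _ hxy i (f w) hi; rewrite /= => ->; last by have := hK w hw; lia.
  done.
pose T := ('I_C * {ffun 'I_n -> 'I_m})%type.
have hrep : forall v : T, exists x : cfgT, Xz x /\ ((exists x', Xz x' /\ PhiG x' = v) -> PhiG x = v).
  move=> v; have [[x' [Xx' e]]|nv] := pselect (exists x', Xz x' /\ PhiG x' = v).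
    by exists x'; split.
  by exists (fun h => zz hm (f h)); split; [exact: x0_in|move=> hv; exfalso; exact: nv].
have [rep hrep'] := choice hrep.
pose B (x : cfgT) := [set y : cfgT | forall i, (1 <= i <= n)%N ->
    (Defs.shift mul inv (inv (S i)) @` Ach (sh (S i) x)) y].
have hcard : #|{: T}| = (C * m ^ n)%N by rewrite card_prod card_ord card_ffun !card_ord.
exists (fun j => B (rep (enum_val (cast_ord (esym hcard) j)))); split.
  move=> j; set x := rep _.
  have Xx : Xz x by have [] := hrep' (enum_val (cast_ord (esym hcard) j)).
  exists (fun i => Ach (sh (S i) x)); split => //.
  by move=> i _; have [] := hAch' (sh (S i) x) (Xz_shift _ Xx).
move=> x Xx.
exists (cast_ord hcard (enum_rank (PhiG x))) => //.
rewrite cast_ordK enum_rankK.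
have [Xr hr] := hrep' (PhiG x).
have er := hr (ex_intro _ x (conj Xx erefl)).
move=> i /andP[i1 i2]; apply/img_shE.
have [_ hA] := hAch' (sh (S i) (rep (PhiG x))) (Xz_shift _ Xr).
apply: hA; first exact: Xz_shift.
move=> w hw; rewrite /Defs.shift.
case: i i1 i2 => // i _ i2.
by apply: key => //.
Qed.


Definition U0 : set (set cfgT) :=
  [set A | exists a : 'I_m, A = [set x | Xz x /\ x one = a]].

Definition S0 (i : nat) : G := pre (PP m i.-1).

Lemma U0_cover : open_cover Xz U0.
Proof.
split.
  move=> A [a ->]; split; first by move=> x [].
  move=> x [Xx xa]; exists [set one]; split; first exact: finite_set1.
  by move=> y Xy hy; split => //; rewrite hy.
by move=> x Xx; exists [set y | Xz y /\ y one = x one] => //; exists (x one).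
Qed.

Lemma lower_sub n k : has_subcover Xz (join_cover mul inv U0 S0 n) k -> (m ^ n <= k)%N.
Proof.
move=> [g [gJ gcov]].
pose a' (a : {ffun 'I_n -> 'I_m}) (i : nat) : 'I_m :=
  if (insub i : option 'I_n) is Some o then a o else Ordinal hm.
have ha' : forall a (o : 'I_n), a' a o = a o by move=> a o; rewrite /a' valK.
have hN : forall a : {ffun 'I_n -> 'I_m}, exists N : int,
    forall i, (i < n)%N -> zz hm (N - PP m i) = a' a i.
  by move=> a; exact: indep.
have [Na hNa] := choice hN.
pose xa a := fun h => zz hm (f h + Na a).
have Xxa : forall a, Xz (xa a) by move=> a F _; exists (Na a).
have hJ : forall a, exists j : 'I_k, g j (xa a).
  by move=> a; have [j _ hj] := gcov _ (Xxa a); exists j.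
have [J hJ'] := choice hJ.
have inj : injective J.
  move=> a b eab; apply/ffunP => o.
  have := hJ' a; have := hJ' b; rewrite eab.
  have [As [hAs ->]] := gJ (J b).
  have io : (1 <= o.+1 <= n)%N by rewrite /= ltn_ord.
  move=> /(_ o.+1 io) /img_shE hb /(_ o.+1 io) /img_shE ha.
  have [c hc] := hAs o.+1 io.
  rewrite hc in ha hb; case: ha => _; case: hb => _.
  rewrite /Defs.shift /xa.
  have hro : mul (inv (S0 o.+1)) one = inv (S0 o.+1) by case: grpG => _ h1 _; case: (h1 (inv (S0 o.+1))).
  rewrite hro f_inv /S0 /= f_pre addrC hNa // => <-.
  by rewrite addrC hNa // -!ha' => ->.
have := leq_card J inj; rewrite card_ffun !card_ord.
done.
Qed.

End Pull.

Section Ent.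
Variable R : realType.
Local Open Scope ereal_scope.

Lemma limsup_le (u : nat -> \bar R) (l : R) :
  (forall e : R, (0 < e)%R -> exists N, forall j, (N <= j)%N -> u j <= (l + e)%:E) ->
  limn_esup u <= l%:E.
Proof.
move=> h; apply/lee_addgt0Pr => e e0.
have [N hN] := h e e0.
rewrite limn_esup_lim; apply: lime_le; first exact: is_cvg_esups.
exists N => // n /= Nn; apply: ge_ereal_sup => _ [j /= nj <-].
by rewrite -EFinD; apply: hN; exact: leq_trans Nn nj.
Qed.

Lemma limsup_ge (u : nat -> \bar R) (l : R) :
  (forall j, (1 <= j)%N -> l%:E <= u j) -> l%:E <= limn_esup u.
Proof.
move=> h; rewrite limn_esup_lim; apply: lime_ge; first exact: is_cvg_esups.
apply: nearW => n; apply: (le_trans (h n.+1 isT)).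
by apply: ereal_sup_ubound; exists n.+1 => //=.
Qed.

Local Close Scope ereal_scope.

Section NcovL.
Variables (G : Type) (m : nat).
Implicit Types (X : set (cfg G m)) (C : set (set (cfg G m))).

Lemma Ncov_le X C n : has_subcover X C n -> Ncov R X C <= n%:R.
Proof.
move=> h; apply: ge_inf; last by exists n.
by exists 0 => _ [k _ <-]; rewrite ler0n.
Qed.

Lemma Ncov_ge X C (k0 : nat) n : (forall k, has_subcover X C k -> (k0 <= k)%N) ->
  has_subcover X C n -> k0%:R <= Ncov R X C.
Proof.
move=> hk hn; apply: lb_le_inf; first by exists n%:R; exists n.
by move=> _ [k hk' <-]; rewrite ler_nat; apply: hk.
Qed.

Lemma subcover_ge1 X C k : X !=set0 -> has_subcover X C k -> (1 <= k)%N.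
Proof.
move=> [x Xx] [g [_ hg]]; case: k g hg => // g hg.
by have [[i ?] _ _] := hg x Xx.
Qed.
End NcovL.

End Ent.

Unset Implicit Arguments.
Theorem theorem1p1 (R : realType) (G : Type) (mul : G -> G -> G) (inv : G -> G)
    (one : G) (grpG : is_group mul inv one) (cntG : countable_type G)
    (infG : infinite_type G) (homZ : Z_hom_image mul) (m : nat) (hm : (1 <= m)%N) :
  exists X : set (cfg G m),
    [/\ subshift mul inv X, minimal_shift mul inv X &
        seq_entropy R mul inv X = (ln (m%:R : R))%:E].
Proof.
have [f [fadd fsurj]] := homZ.
have [pre fpre] := choice fsurj.
have [idx idx_inj] := cntG.
exists (Xz f hm); split.
- have := @Xz_sub G mul inv one grpG f fadd m hm. exact.
- have := @Xz_min G mul inv one grpG f fadd pre fpre m hm. exact.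
have Xne : Xz f hm !=set0 by exists (fun h => zz hm (f h)); exact: x0_in.
have hm0 : (0 < m%:R :> R) by rewrite ltr0n.
apply/eqP; rewrite eq_le; apply/andP; split.
  apply: ge_ereal_sup => _ [U [S [hU ->]]].
  have [C [C0 hC]] := upper_cover grpG fadd idx_inj hU.
  apply: limsup_le => e e0.
  have hC0 : (0 < C%:R :> R) by rewrite ltr0n.
  have lnC0 : 0 <= ln (C%:R : R) by apply: ln_ge0; rewrite ler1n.
  exists (Num.bound (ln (C%:R : R) / e)).+1 => j hj.
  rewrite lee_fin.
  have hsub := hC S j.
  have j0 : (0 < j%:R :> R) by rewrite ltr0n; lia.
  have N1 : 1 <= Ncov R (Xz f hm) (join_cover mul inv U S j).
    apply: (@le_trans _ _ (1%:R)) => //.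
    apply: Ncov_ge hsub => k hk; exact: subcover_ge1 Xne hk.
  have N2 := Ncov_le R hsub.
  have hln : ln (Ncov R (Xz f hm) (join_cover mul inv U S j)) <= ln (C%:R : R) + ln (m%:R : R) *+ j.
    have pC : (C%:R : R) \in Num.pos by rewrite posrE.
    have pM : ((m%:R : R) ^+ j) \in Num.pos by rewrite posrE exprn_gt0.
    have e1 : ln ((C * m ^ j)%:R : R) = ln (C%:R : R) + ln (m%:R : R) *+ j.
      by rewrite natrM natrX (lnM pC pM) lnXn.
    rewrite -e1 ler_ln //; rewrite posrE; last by rewrite ltr0n muln_gt0 expn_gt0 C0 hm.
    by apply: (lt_le_trans ltr01).
  have hb := archi_boundP (divr_ge0 lnC0 (ltW e0)).
  have hb' : ln (C%:R : R) / e < j%:R.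
    apply: (lt_le_trans hb); rewrite ler_nat; exact: ltnW hj.
  have hCe : ln (C%:R : R) <= j%:R * e.
    by rewrite -ler_pdivrMr // ltW.
  rewrite -(ler_pM2l j0) mulrA mulfV ?mul1r; last by rewrite gt_eqF.
  apply: (le_trans hln); rewrite mulrDr -[ln _ *+ j]mulr_natl; lra.
apply: (@le_trans _ _ (seq_entropy_cover R mul inv (Xz f hm) (U0 one f hm) (S0 pre m))); last first.
  by apply: ereal_sup_ubound; exists (U0 one f hm), (S0 pre m); split; first exact: U0_cover.
apply: limsup_ge => j hj; rewrite lee_fin.
have [C [C0 hC]] := upper_cover grpG fadd idx_inj (U0_cover one f hm).
have hsub := hC (S0 pre m) j.
have N1 : (m ^ j)%:R <= Ncov R (Xz f hm) (join_cover mul inv (U0 one f hm) (S0 pre m) j).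
  apply: Ncov_ge hsub => k hk; exact: (@lower_sub G mul inv one grpG f fadd pre fpre m hm j k hk).
have j0 : (0 < j%:R :> R) by rewrite ltr0n; lia.
have hln : ln (m%:R : R) *+ j <= ln (Ncov R (Xz f hm) (join_cover mul inv (U0 one f hm) (S0 pre m) j)).
  rewrite -lnXn // ler_ln ?posrE ?exprn_gt0 //; first by rewrite -natrX.
  by apply: (lt_le_trans _ N1); rewrite ltr0n expn_gt0 hm.
rewrite -(ler_pM2l j0) mulrA mulfV ?mul1r; last by rewrite gt_eqF.
by rewrite mulr_natl.
Qed.
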